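(* The semigroup $s\mathcal{R}(\mathfrak{S}_n)=\mathcal{R}(\mathfrak{S}_n)\setminus\mathfrak{S}_n$ is generated by the elements $z^r_{i,j}$ and $e_{i,j}$ ($r\in[n-1]$, $i,j\in[n]$, $i<j$).
   Context: $\mathfrak{C}_n$ is the partition monoid (set partitions of $[2n]$, top points $1..n$, bottom $n+1..2n$, concatenation product $*$). $I\preceq J$ means each block of $J$ is a union of blocks of $I$. $\mathfrak{S}_n\subseteq\mathfrak{C}_n$ consists of the partitions with all blocks $\{i,n+j\}$; $s_r$ are the simple transpositions; $1=\{\{i,n+i\}\}$. $\mathcal{R}(\mathfrak{S}_n)$ is the monoid of pairs $(I,J)$ of set partitions of $[2n]$ with $I\in\mathfrak{S}_n$, $I\preceq J$, product $(I,J)(H,K)=(I*H,J*K)$; $\mathfrak{S}_n$ is identified with $\{(w,w)\}$. For $i<j$, $e_{i,j}=(1,J_{i,j})$, where $J_{i,j}$ is obtained from $1$ by merging the blocks $\{i,n+i\}$ and $\{j,n+j\}$, and $z^r_{i,j}=e_{i,j}s_r$. *)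

(* Defs.v *)
From mathcomp Require Import all_boot all_fingroup.
Set Implicit Arguments. Unset Strict Implicit. Unset Printing Implicit Defensive.

(* Points of [2n]: inl i = top point i+1, inr i = bottom point n+i+1 (0-based 'I_n). *)
Definition pt (n : nat) : finType := ('I_n + 'I_n)%type.
Definition top n (i : 'I_n) : pt n := inl i.
Definition bot n (i : 'I_n) : pt n := inr i.

Definition spart (n : nat) := {set {set pt n}}.
Definition is_spart n (P : spart n) : Prop := partition P [set: pt n].

Definition same_block n (P : spart n) (x y : pt n) : bool :=
  [exists B in P, (x \in B) && (y \in B)].

(* Concatenation: I stacked on top of J, bottom row of I glued to top row of J.
   Three levels of points: level 0 = top of I, level 1 = middle, level 2 = bottom of J. *)
Definition lvl n := ('I_3 * 'I_n)%type.
Definition toI n (x : lvl n) : pt n := if val x.1 == 0 then top x.2 else bot x.2.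
Definition toJ n (x : lvl n) : pt n := if val x.1 == 1 then top x.2 else bot x.2.
Definition cedge n (I J : spart n) : rel (lvl n) := fun x y =>
  [&& val x.1 <= 1, val y.1 <= 1 & same_block I (toI x) (toI y)] ||
  [&& 1 <= val x.1, 1 <= val y.1 & same_block J (toJ x) (toJ y)].
Definition emb n (p : pt n) : lvl n :=
  match p with inl i => (ord0, i) | inr i => (ord_max, i) end.
Definition pmul n (I J : spart n) : spart n :=
  equivalence_partition (fun x y => connect (cedge I J) (emb x) (emb y)) [set: pt n].

Definition perm_part n (w : 'S_n) : spart n :=
  [set [set top i; bot (w i)] | i : 'I_n].

Definition refines n (I J : spart n) : Prop :=
  forall B, B \in J -> B = \bigcup_(A in I | A \subset B) A.

Definition pair n := (spart n * spart n)%type.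
Definition inR n (a : pair n) : Prop :=
  (exists w : 'S_n, a.1 = perm_part w) /\ is_spart a.2 /\ refines a.1 a.2.
Definition inS n (a : pair n) : Prop := exists w : 'S_n, a = (perm_part w, perm_part w).
Definition in_sR n (a : pair n) : Prop := inR a /\ ~ inS a.
Definition mulR n (a b : pair n) : pair n := (pmul a.1 b.1, pmul a.2 b.2).

Definition permR n (w : 'S_n) : pair n := (perm_part w, perm_part w).
(* simple transposition s_r swapping r and r' where r' = r+1 *)
Definition sR n (r r' : 'I_n) : pair n := permR (tperm r r').

Definition blk n (i : 'I_n) : {set pt n} := [set top i; bot i].
Definition Jij n (i j : 'I_n) : spart n :=
  ((perm_part 1 :\ blk i) :\ blk j) :|: [set blk i :|: blk j].
Definition eR n (i j : 'I_n) : pair n := (perm_part 1, Jij i j).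
Definition zR n (r r' i j : 'I_n) : pair n := mulR (eR i j) (sR r r').

Definition is_gen n (x : pair n) : Prop :=
  (exists i j : 'I_n, i < j /\ x = eR i j) \/
  (exists r r' i j : 'I_n, val r' = (val r).+1 /\ i < j /\ x = zR r r' i j).

(* Main.v *)
Require Import Defs.
From mathcomp Require Import all_boot all_fingroup.
Set Implicit Arguments. Unset Strict Implicit. Unset Printing Implicit Defensive.


Section K.
Variable n : nat.

Definition kpart (T : eqType) (k : pt n -> T) : spart n := preim_partition k [set: pt n].

Lemma kpartP (T : eqType) (k : pt n -> T) : is_spart (kpart k).
Proof. exact: preim_partitionP. Qed.

Lemma same_block_kpart (T : eqType) (k : pt n -> T) x y :
  same_block (kpart k) x y = (k x == k y).
Proof.
apply/existsP/idP.
  move=> [B /andP[/imsetP[b _ ->]]]; rewrite !inE => /andP[/eqP <- /eqP <-]; done.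
move=> e; exists [set y0 in [set: pt n] | k x == k y0]; rewrite !inE e eqxx andbT.
rewrite andbT; rewrite /kpart /preim_partition /equivalence_partition; apply/imsetP; exists x => //.
Qed.

Lemma kpart_ext (T1 T2 : eqType) (k1 : pt n -> T1) (k2 : pt n -> T2) :
  (forall x y, (k1 x == k1 y) = (k2 x == k2 y)) -> kpart k1 = kpart k2.
Proof.
move=> H; rewrite /kpart /preim_partition /equivalence_partition.
by apply: eq_imset => x; apply/setP => y; rewrite !inE H.
Qed.

Lemma kpart_eqfun (T : eqType) (k1 k2 : pt n -> T) : k1 =1 k2 -> kpart k1 = kpart k2.
Proof. by move=> H; apply: kpart_ext => x y; rewrite !H. Qed.

Lemma part_kpart (P : spart n) : is_spart P -> P = kpart (pblock P).
Proof. by move=> H; rewrite /kpart preim_partition_pblock. Qed.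

Lemma same_blockC (P : spart n) x y : same_block P x y = same_block P y x.
Proof. by apply/existsP/existsP => -[B /andP[PB /andP[a b]]]; exists B; rewrite PB a b. Qed.

Lemma cedgeC (I J : spart n) x y : cedge I J x y = cedge I J y x.
Proof.
rewrite /cedge (same_blockC I) (same_blockC J).
by case: (val x.1 <= 1); case: (val y.1 <= 1); case: (1 <= val x.1); case: (1 <= val y.1).
Qed.

Lemma conn_sym (I J : spart n) x y : connect (cedge I J) x y = connect (cedge I J) y x.
Proof. by apply: sym_connect_sym => a b; apply: cedgeC. Qed.

Lemma pmul_key (I J : spart n) (T : eqType) (k : pt n -> T) (g : lvl n -> T) :
  (forall x y, cedge I J x y -> g x = g y) -> (forall p, g (emb p) = k p) ->
  (forall p q, k p = k q -> connect (cedge I J) (emb p) (emb q)) ->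
  pmul I J = kpart k.
Proof.
move=> He Hg Hc; rewrite /pmul /kpart /preim_partition /equivalence_partition.
apply: eq_imset => x; apply/setP => y; rewrite !inE; apply/idP/eqP; last exact: Hc.
case/connectP => p pth ey; rewrite -!Hg ey.
elim: p (emb x) pth {ey} => //= z p IH a /andP[e pth]; rewrite (He _ _ e); exact: IH.
Qed.


Definition idx (p : pt n) : 'I_n := match p with inl i => i | inr m => m end.
Definition relab (v : 'S_n) (p : pt n) : pt n :=
  match p with inl i => inl i | inr m => inr ((v^-1)%g m) end.
Definition L0 : 'I_3 := @Ordinal 3 0 isT.
Definition L1 : 'I_3 := @Ordinal 3 1 isT.
Definition L2 : 'I_3 := @Ordinal 3 2 isT.

Lemma lvl_ind (P : lvl n -> Prop) :
  (forall k, P (L0, k)) -> (forall k, P (L1, k)) -> (forall k, P (L2, k)) -> forall x, P x.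
Proof.
move=> H0 H1 H2 [[l Hl] k]; move: Hl; case: l => [|[|[|l]]] Hl.
- by rewrite (_ : Ordinal Hl = L0) //; apply: val_inj.
- by rewrite (_ : Ordinal Hl = L1) //; apply: val_inj.
- by rewrite (_ : Ordinal Hl = L2) //; apply: val_inj.
- by [].
Qed.

Lemma emb_top i : emb (inl i : pt n) = (L0, i).
Proof. rewrite /emb /=; congr (_, _); exact: val_inj. Qed.
Lemma emb_bot i : emb (inr i : pt n) = (L2, i).
Proof. rewrite /emb /=; congr (_, _); exact: val_inj. Qed.

Lemma pmul_kk (T1 T2 : eqType) (lam : pt n -> T1) (c : 'I_n -> T2) (v : 'S_n) :
  (forall a b, c a = c b -> lam (inr a) = lam (inr b)) ->
  pmul (kpart lam) (kpart (fun p => c (idx (relab v p)))) = kpart (fun p => lam (relab v p)).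
Proof.
move=> Hc.
pose g (x : lvl n) := if val x.1 == 0 then lam (inl x.2) else
   if val x.1 == 1 then lam (inr x.2) else lam (inr ((v^-1)%g x.2)).
apply: (pmul_key (g := g)).
- elim/lvl_ind => k; elim/lvl_ind => k'; rewrite /cedge /toI /toJ /g /= ?same_block_kpart /= ?orbF //;
  (try by case); (try case/orP);
  move/eqP => H; first [by rewrite H | by rewrite (Hc _ _ H) | by rewrite (Hc _ _ (esym H))].
- by case => i; rewrite ?emb_top ?emb_bot.
move=> p q E.
pose h (p : pt n) : lvl n := match p with inl i => (L0, i) | inr m => (L1, (v^-1)%g m) end.
have E1 r : connect (cedge (kpart lam) (kpart (fun p => c (idx (relab v p))))) (emb r) (h r).
  case: r => [i|m]; first by rewrite emb_top.
  rewrite emb_bot; apply: connect1; rewrite /cedge /toI /toJ /= !same_block_kpart /=.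
  by [].
apply: connect_trans (E1 p) _; rewrite conn_sym; apply: connect_trans (E1 q) _.
apply: connect1; move: E; case: p => [i|m]; case: q => [j|m'] E;
  by rewrite /cedge /toI /toJ /= same_block_kpart /= E eqxx.
Qed.


Definition cij (i j k : 'I_n) : 'I_n := if k == j then i else k.

Lemma pmul_merge (T : eqType) (rho : 'I_n -> T) (i j : 'I_n) :
  pmul (kpart (fun p => rho (idx p))) (kpart (fun p => cij i j (idx p))) =
  kpart (fun p => if rho (idx p) == rho j then rho i else rho (idx p)).
Proof.
pose rho' k := if rho k == rho j then rho i else rho k.
have Hc a b : cij i j a = cij i j b -> rho' a = rho' b.
  rewrite /cij /rho'; case: eqP => [->|aj]; case: eqP => [->|bj] // E; subst => //;
  by rewrite eqxx; case: eqP.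
pose g (x : lvl n) := rho' x.2.
pose I : spart n := kpart (fun p => rho (idx p)).
pose J : spart n := kpart (fun p => cij i j (idx p)).
rewrite -/I -/J.
apply: (pmul_key (g := g)).
- elim/lvl_ind => k; elim/lvl_ind => k'; rewrite /cedge /toI /toJ /g /I /J /= ?same_block_kpart /= ?orbF //;
  (try by case); (try case/orP);
  move/eqP => H; first [by rewrite /rho' H | by rewrite (Hc _ _ H) | by rewrite (Hc _ _ (esym H))].
- by case => a; rewrite ?emb_top ?emb_bot.
have V1 k : connect (cedge I J) (L0, k) (L1, k).
  by apply: connect1; rewrite /cedge /toI /toJ /I /J /= same_block_kpart /= eqxx.
have V2 k : connect (cedge I J) (L0, k) (L2, k).
  apply: connect_trans (V1 k) _; apply: connect1.
  by rewrite /cedge /toI /toJ /I /J /= ?same_block_kpart /= ?eqxx ?orbT.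
have Em p : connect (cedge I J) (L0, idx p) (emb p).
  by case: p => a; rewrite ?emb_top ?emb_bot.
have H0 a b : rho a = rho b -> connect (cedge I J) (L0, a) (L0, b).
  by move=> E; apply: connect1; rewrite /cedge /toI /toJ /I /J /= same_block_kpart /= E eqxx.
have H1 : connect (cedge I J) (L0, j) (L0, i).
  apply: connect_trans (V1 j) _; rewrite conn_sym; apply: connect_trans (V1 i) _.
  apply: connect1; rewrite /cedge /toI /toJ /I /J /= !same_block_kpart /= /cij eqxx.
  by case: (i =P j) => [->|]; rewrite ?eqxx ?orbT.
move=> p q E; apply: (connect_trans (y := (L0, idx p))); first by rewrite conn_sym.
apply: (connect_trans (y := (L0, idx q))); last exact: Em.
move: E; set a := idx p; set b := idx q.
case: eqP => ha; case: eqP => hb E.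
- by apply: H0; rewrite ha hb.
- apply: connect_trans (H0 _ _ ha) _; apply: connect_trans H1 _; exact: H0.
- apply: connect_trans (H0 _ _ E) _; rewrite conn_sym in H1; apply: connect_trans H1 _.
  exact: H0.
- exact: H0.
Qed.

End K.


Section B.
Variable n : nat.
Implicit Types (u t v : 'S_n) (i j a b : 'I_n).

Lemma relab1 (p : pt n) : relab 1 p = p.
Proof. by case: p => // m; rewrite /= invg1 perm1. Qed.

Lemma relabM u t (p : pt n) : relab u (relab t p) = relab (u * t)%g p.
Proof. by case: p => // m; rewrite /= invMg permM. Qed.

Lemma perm_kpart u : perm_part u = kpart (fun p : pt n => idx (relab u p)).
Proof.
have cls i : [set y in [set: pt n] | i == idx (relab u y)] = [set top i; bot (u i)].
  apply/setP => y; rewrite !inE; case: y => [a|m] /=; first by rewrite orbF eq_sym.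
  by rewrite /bot /= eq_sym (canF_eq (permKV u)).
apply/setP => B; rewrite /kpart /preim_partition /equivalence_partition.
apply/imsetP/imsetP => [[i _ ->]|[x _ ->]].
  by exists (inl i) => //; rewrite -cls.
by exists (idx (relab u x)) => //; rewrite -cls; apply/setP => y; rewrite !inE.
Qed.

Lemma perm_part_same u (x y : pt n) : same_block (perm_part u) x y = (idx (relab u x) == idx (relab u y)).
Proof. by rewrite perm_kpart same_block_kpart. Qed.

Lemma cij_same i j a b : (cij i j a == cij i j b) =
  [|| a == b, (a == i) && (b == j) | (a == j) && (b == i)] || ((a == j) && (b == j)).
Proof.
rewrite /cij; case: (a =P j) => [->|aj]; case: (b =P j) => [->|bj]; rewrite ?eqxx ?orbT //=.
- by rewrite (eq_sym j b) (negbTE (introN eqP bj)) andbF /= orbF eq_sym.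
- by rewrite (negbTE (introN eqP aj)) andbT /= !orbF.
- by rewrite andbF !orbF.
Qed.

Lemma cijP i j a b : cij i j a = cij i j b -> [\/ a = b, (a = i /\ b = j) | (a = j /\ b = i)].
Proof.
move/eqP; rewrite cij_same => /orP[/or3P[/eqP->|/andP[/eqP-> /eqP->]|/andP[/eqP-> /eqP->]]|/andP[/eqP-> /eqP->]].
all: by [apply: Or31 | apply: Or32 | apply: Or33 | constructor].
Qed.

Lemma blk_inj : injective (@blk n).
Proof. move=> a b /setP/(_ (top a)); rewrite /blk !inE eqxx /= orbF. by move/esym; rewrite /top => /eqP []. Qed.

Ltac neqs := repeat match goal with H : ?x <> ?y |- _ =>
  rewrite ?(negbTE (introN eqP H)) ?(negbTE (introN eqP (nesym H))); clear H end.

Lemma in_blk c (y : pt n) : (y \in blk c) = (idx y == c).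
Proof. by case: y => m; rewrite /blk /top /bot !inE /= ?orbF. Qed.

Lemma cij_cls i j a b : i != j -> (cij i j a == cij i j b) =
  (if (a == i) || (a == j) then (b == i) || (b == j) else b == a).
Proof.
move/eqP => ij; rewrite /cij.
case: (a =P j) => [?|?]; case: (b =P j) => [?|?]; case: (a =P i) => [?|?]; case: (b =P i) => [?|?];
  subst; try by case: ij.
all: neqs; rewrite ?eqxx //=.
Qed.

Lemma Jij_kpart i j : i != j -> Jij i j = kpart (fun p : pt n => cij i j (idx p)).
Proof.
move=> ij.
pose F a := if (a == i) || (a == j) then blk i :|: blk j else blk a.
have cls a : [set y in [set: pt n] | cij i j a == cij i j (idx y)] = F a.
  apply/setP => y; rewrite !inE /F (cij_cls _ _ ij).
  by case: ifP => _; [rewrite in_setU (in_blk i y) (in_blk j y) | rewrite (in_blk a y)].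
have P1 : perm_part 1 = [set blk a | a : 'I_n].
  by apply: eq_imset => a; rewrite perm1.
apply/setP => B; rewrite /Jij P1 /kpart /preim_partition /equivalence_partition !inE.
apply/idP/imsetP.
- case/orP => [/andP[Bj /andP[Bi /imsetP[a _ Ba]]]|/eqP ->].
    exists (inl a) => //; rewrite cls /F /= Ba; case: (a =P i) => [ai|]; first by rewrite -ai Ba eqxx in Bi.
    by case: (a =P j) => [aj|] //; rewrite -aj Ba eqxx in Bj.
  by exists (inl i) => //; rewrite cls /F eqxx.
- move=> [x _ ->]; rewrite cls /F.
  case: ifP => [_|/negbT/norP[xi xj]]; first by rewrite eqxx orbT.
  apply/orP; left.
  rewrite (inj_eq (@blk_inj)) xj (inj_eq (@blk_inj)) xi /=.
  exact: imset_f.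
Qed.

End B.


Section C.
Variable n : nat.
Implicit Types (u t v : 'S_n) (i j a b : 'I_n).

Lemma pmul_perm u t : pmul (perm_part u) (perm_part t) = perm_part (u * t)%g.
Proof.
rewrite !perm_kpart (@pmul_kk n _ _ (fun p => idx (relab u p)) (fun k => k) t); last by move=> a b ->.
by apply: kpart_eqfun => p; rewrite relabM.
Qed.

Lemma eR_eq i j : i != j -> eR i j = (perm_part 1, kpart (fun p : pt n => cij i j (idx (relab 1 p)))).
Proof. by move=> ij; rewrite /eR (Jij_kpart ij); congr (_, _); apply: kpart_eqfun => p; rewrite relab1. Qed.

Lemma zR_eq r r' i j : i != j -> zR r r' i j =
  (perm_part (tperm r r'), kpart (fun p : pt n => cij i j (idx (relab (tperm r r') p)))).
Proof.
move=> ij; rewrite /zR /mulR /eR /sR /permR /= pmul_perm mul1g (Jij_kpart ij) perm_kpart.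
by rewrite (@pmul_kk n _ _ (fun p => cij i j (idx p)) (fun k => k)) // => a b ->.
Qed.

Lemma refines_kpart (T1 T2 : eqType) (k1 : pt n -> T1) (k2 : pt n -> T2) :
  (forall x y, k1 x = k1 y -> k2 x = k2 y) -> refines (kpart k1) (kpart k2).
Proof.
move=> H B /imsetP[b _ ->]; apply/setP => y; apply/idP/bigcupP.
- move=> yB; exists [set z in [set: pt n] | k1 y == k1 z]; last by rewrite !inE eqxx.
  rewrite (_ : _ \in kpart k1); last by apply/imsetP; exists y.
  apply/subsetP => z; rewrite !inE /= => /eqP/H e; move: yB; rewrite !inE /= e.
  done.
- by move=> [A /andP[_ /subsetP sub] yA]; apply: sub.
Qed.

Lemma refines_inv (T : eqType) (k1 : pt n -> T) (J : spart n) :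
  is_spart J -> refines (kpart k1) J -> forall x y, k1 x = k1 y -> pblock J x = pblock J y.
Proof.
move=> /and3P[/eqP cJ tJ _] ref x y e.
have xc : x \in cover J by rewrite cJ.
have PB := pblock_mem xc.
have xB : x \in pblock J x by rewrite mem_pblock.
have := ref _ PB; move=> eB; move: (xB); rewrite {1}eB => /bigcupP[A /andP[/imsetP[a _ ->] /subsetP sub]].
rewrite !inE /= => ax.
have yB : y \in pblock J x by apply: sub; rewrite !inE -e.
by rewrite (same_pblock tJ yB).
Qed.

Lemma gen_sR t i j : i != j -> in_sR (perm_part t, kpart (fun p : pt n => cij i j (idx (relab t p)))).
Proof.
move=> ij; split.
  split; first by exists t.
  split; first exact: kpartP.
  by rewrite /= perm_kpart; apply: refines_kpart => x y ->.
move=> [w [e1 e2]]; rewrite -e1 in e2.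
have := congr1 (fun P => same_block P (top i) (top j)) e2.
rewrite /= same_block_kpart perm_part_same /= /cij.
rewrite (negbTE (ij : i != j)); case: (i =P j) => [E|_]; first by rewrite E eqxx in ij. by rewrite !eqxx.
Qed.

End C.


Section D.
Variable n : nat.
Implicit Types (u t v : 'S_n) (i j a b : 'I_n).

Lemma ord_neq_lt i j : i < j -> i != j.
Proof. by move=> lt; apply: contraTneq lt => ->; rewrite ltnn. Qed.

Lemma step1 N : forall (T : eqType) (rho : 'I_n -> T) i0 j0,
  #|[set p : 'I_n * 'I_n | (p.1 < p.2) && (rho p.1 == rho p.2)]| < N ->
  i0 < j0 -> rho i0 = rho j0 ->
  exists x s, (forall y, y \in x :: s -> is_gen y) /\
    foldl (@mulR n) x s = (perm_part 1, kpart (fun p : pt n => rho (idx p))).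
Proof.
elim: N => // N IH T rho i0 j0 HN lt E.
have ij := ord_neq_lt lt.
pose rho0 k : option T := if k == j0 then None else Some (rho k).
case: (pickP [pred p : 'I_n * 'I_n | (p.1 < p.2) && (rho0 p.1 == rho0 p.2)]) =>
   [[i1 j1] /= /andP[lt1 /eqP E1] | none].
- have HN0 : #|[set p : 'I_n * 'I_n | (p.1 < p.2) && (rho0 p.1 == rho0 p.2)]| < N.
    apply: leq_trans (proper_card _) _; last by rewrite -ltnS; exact: HN.
    apply/properP; split.
      apply/subsetP => [[a b]]; rewrite !inE /= => /andP[ab /eqP e]; rewrite ab /=.
      move: e; rewrite /rho0; case: (a =P j0) => [aj|_]; case: (b =P j0) => [bj|_] //.
        by rewrite aj bj.
      by case=> ->.
    exists (i0, j0); rewrite !inE /= ?lt ?E ?eqxx //=.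
    by rewrite /rho0 eqxx (negbTE ij).
  have [x [s [Hg Hf]]] := IH _ rho0 i1 j1 HN0 lt1 E1.
  exists x, (rcons s (eR i0 j0)); split.
    move=> y; rewrite in_cons mem_rcons in_cons => /orP[yx|/orP[/eqP ->|ys]].
    + by apply: Hg; rewrite in_cons yx.
    + by left; exists i0, j0.
    + by apply: Hg; rewrite in_cons ys orbT.
  rewrite foldl_rcons Hf /eR /mulR /= pmul_perm mulg1 (Jij_kpart ij) pmul_merge.
  congr (_, _); apply: kpart_ext => p q.
  have K a : (if rho0 a == rho0 j0 then rho0 i0 else rho0 a) = Some (rho a).
    rewrite /rho0 eqxx (negbTE ij); case: (a =P j0) => [->|] //=; by rewrite E.
  by rewrite !K.
- exists (eR i0 j0), [::]; split.
    by move=> y; rewrite in_cons in_nil orbF => /eqP ->; left; exists i0, j0.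
  rewrite /= /eR (Jij_kpart ij); congr (_, _); apply: kpart_ext => p q.
  rewrite cij_cls //; set a := idx p; set b := idx q.
  have Hn x y : x != y -> x != j0 -> y != j0 -> rho x != rho y.
    move=> xy xj yj; apply/negP => /eqP exy.
    have h1 := none (x, y); have h2 := none (y, x); rewrite /= /rho0 (negbTE xj) (negbTE yj) in h1 h2.
    move: h1 h2; rewrite exy eqxx !andbT; case: (ltngtP x y) => // /val_inj exy'.
    by rewrite exy' eqxx in xy.
  have ri : forall x, (x == i0) || (x == j0) -> rho x = rho i0.
    by move=> x /orP[] /eqP ->.
  case: ifP => ha.
  + case hb: ((b == i0) || (b == j0)); first by rewrite (ri _ ha) (ri _ hb) eqxx.
    move/negbT: hb; rewrite negb_or => /andP[bi bj].
    rewrite (ri _ ha); apply/esym; apply: negbTE; apply: Hn => //; by rewrite eq_sym.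
  + move/negbT: ha; rewrite negb_or => /andP[ai aj].
    case: eqP => [->|ba]; first by rewrite !eqxx.
    apply/esym; apply: negbTE; case: (b =P j0) => [->|bj].
      by rewrite -E; apply: Hn.
    by apply: Hn => //; [rewrite eq_sym; apply/eqP | apply/eqP].
Qed.

Local Open Scope group_scope.
Definition Adj : {set 'S_n} :=
  [set t | [exists r : 'I_n, exists r' : 'I_n, (val r' == (val r).+1) && (t == tperm r r')]].

Lemma tperm_adj a b : tperm a b \in <<Adj>>.
Proof.
have key d : forall a b : 'I_n, val b = val a + d.+1 -> tperm a b \in <<Adj>>.
  elim: d => [|d IH] a' b' e.
    apply: mem_gen; rewrite inE; apply/existsP; exists a'; apply/existsP; exists b'.
    by rewrite eqxx andbT e addn1.
  have lt : (val b').-1 < n by apply: leq_ltn_trans (ltn_ord b'); apply: leq_pred.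
  pose c := Ordinal lt.
  have ec : val c = val a' + d.+1 by rewrite /= e addnS.
  have cb : val b' = (val c).+1 by rewrite e ec addnS.
  have -> : tperm a' b' = (tperm a' c) ^ (tperm c b').
    rewrite tpermJ tpermL tpermD //.
      by apply/eqP => /(congr1 val); rewrite ec => /eqP; rewrite -{2}[val a']addn0 eqn_add2l.
    by apply/eqP => /(congr1 val); rewrite e => /eqP; rewrite -{2}[val a']addn0 eqn_add2l.
  apply: groupJ; first exact: IH.
  apply: mem_gen; rewrite inE; apply/existsP; exists c; apply/existsP; exists b'.
  by rewrite cb !eqxx.
case: (ltngtP a b) => h.
- by apply: (key (b - a).-1); rewrite prednK ?subn_gt0 // subnKC // ltnW.
- by rewrite tpermC; apply: (key (a - b).-1); rewrite prednK ?subn_gt0 // subnKC // ltnW.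
- by rewrite (val_inj h) tperm1 group1.
Qed.

Lemma adj_gen : <<Adj>> = [set: 'S_n].
Proof.
apply/eqP; rewrite eqEsubset subsetT /=; apply/subsetP => s _.
have [ts -> _] := prod_tpermP s.
by apply: group_prod => -[a b] _; apply: tperm_adj.
Qed.

Lemma step2 (T : eqType) (rho : 'I_n -> T) i0 j0 x s : i0 != j0 -> rho i0 = rho j0 ->
  foldl (@mulR n) x s = (perm_part 1, kpart (fun p : pt n => rho (idx p))) ->
  forall k (c : 'I_k -> 'S_n), (forall l, c l \in Adj) ->
  exists s', (forall y, y \in s' -> is_gen y) /\
    foldl (@mulR n) x (s ++ s') = (perm_part (\prod_(l < k) c l)%g,
      kpart (fun p : pt n => rho (idx (relab (\prod_(l < k) c l)%g p)))).
Proof.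
move=> ij E Hf; elim => [|k IH] c Hc.
  exists [::]; split => //; rewrite cats0 Hf big_ord0; congr (_, _).
  by apply: kpart_eqfun => p; rewrite relab1.
have [s' [Hg Hf']] := IH (fun l => c (widen_ord (leqnSn k) l)) (fun l => Hc _).
rewrite big_ord_recr /=.
set u := (\prod_(l < k) c (widen_ord (leqnSn k) l))%g in Hf' *.
have := Hc ord_max; rewrite inE => /existsP[r /existsP[r' /andP[/eqP rr' /eqP ->]]].
have [i1 [j1 [lt1 Eq1]]] : exists i1 j1, i1 < j1 /\ rho ((u^-1)%g i1) = rho ((u^-1)%g j1).
  case: (ltngtP (u i0) (u j0)) => h.
  - by exists (u i0), (u j0); rewrite !permK.
  - by exists (u j0), (u i0); rewrite !permK.
  - by move/val_inj/perm_inj: h => h; rewrite h eqxx in ij.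
exists (rcons s' (zR r r' i1 j1)); split.
  move=> y; rewrite mem_rcons in_cons => /orP[/eqP ->|ys]; last exact: Hg.
  by right; exists r, r', i1, j1.
rewrite -rcons_cat foldl_rcons Hf' (zR_eq _ _ (ord_neq_lt lt1)) /mulR /= pmul_perm.
congr (_, _).
rewrite (@pmul_kk n _ _ (fun p => rho (idx (relab u p))) (cij i1 j1)).
  by apply: kpart_eqfun => p; rewrite relabM.
by move=> a b /cijP[->|[-> ->]|[-> ->]].
Qed.

End D.


Theorem proposition5p18 (n : nat) :
  (forall x : pair n, is_gen x -> in_sR x) /\
  (forall a : pair n, in_sR a ->
     exists (x : pair n) (s : seq (pair n)),
       (forall y, y \in x :: s -> is_gen y) /\ a = foldl (@mulR n) x s).
Proof.
split.
  move=> x [[i [j [lt ->]]]|[r [r' [i [j [_ [lt ->]]]]]]]; have ij := ord_neq_lt lt.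
    by rewrite (eR_eq ij); apply: gen_sR.
  by rewrite (zR_eq _ _ ij); apply: gen_sR.
move=> [a1 J] [[[w /= ea1] [/= Jp ref]] notS]; subst a1.
have HJ := part_kpart Jp.
rewrite perm_kpart in ref.
have Href := refines_inv Jp ref.
pose rho i := pblock J (inl i).
have Hk p : pblock J p = rho (idx (relab w p)).
  by apply: Href; case: p.
have HJ' : J = kpart (fun p => rho (idx (relab w p))).
  by rewrite {1}HJ; apply: kpart_eqfun.
have [i0 [j0 [lt E]]] : exists i0 j0 : 'I_n, i0 < j0 /\ rho i0 = rho j0.
  case: (pickP [pred p : 'I_n * 'I_n | (p.1 < p.2) && (rho p.1 == rho p.2)]) =>
     [[i0 j0] /andP[lt /eqP E]|none]; first by exists i0, j0.
  exfalso; apply: notS; exists w; congr (_, _).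
  rewrite HJ' perm_kpart; apply: kpart_ext => p q.
  set a := idx _; set b := idx _.
  apply/eqP/eqP => [e|->] //.
  case: (ltngtP a b) => h; last exact: val_inj.
    by have := none (a, b); rewrite /= h e eqxx.
  by have := none (b, a); rewrite /= h e eqxx.
have [x [s [Hg Hf]]] := step1 (ltnSn _) lt E.
have : w \in <<Adj n>>%g by rewrite adj_gen inE.
case/gen_prodgP => k [c Hc ew].
have [s' [Hg' Hf']] := step2 (ord_neq_lt lt) E Hf Hc.
exists x, (s ++ s'); split; last by rewrite Hf' HJ' -ew.
move=> y; rewrite in_cons mem_cat => /orP[yx|/orP[ys|ys]].
- by apply: Hg; rewrite in_cons yx.
- by apply: Hg; rewrite in_cons ys orbT.
- exact: Hg'.
Qed.
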